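(* Let $n\ge 6$ be even, let $j\in\{1,2,3,4\}$, and let $t\in D$ lie in the $j$-th segment of level $n$, i.e. $M_{n-1}+(j-1)2^{n-3}<t\le M_{n-1}+j\,2^{n-3}$. Then $4t-1$, $4t+1$, $4t+3$ all belong to $D$ and all lie in the $j$-th segment of level $n+2$, i.e. in the interval $\big(M_{n+1}+(j-1)2^{n-1},\ M_{n+1}+j\,2^{n-1}\big]$.
   Context: Let $D$ (OEIS A036991) be the set of nonnegative integers $m$ such that, reading the binary expansion of $m$ from the least significant bit to the most significant bit, at every point the number of 1's read so far is at least the number of 0's read so far. Let $M_n=2^n-1$. For even $n\ge 6$ the interval $(M_{n-1},M_n]$ (the $n$-level, of length $2^{n-1}$) is divided into four equal segments $(M_{n-1}+(j-1)2^{n-3},\,M_{n-1}+j\,2^{n-3}]$, $j=1,2,3,4$. *)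

(* Defs.v *)
From mathcomp Require Import all_boot.
Set Implicit Arguments. Unset Strict Implicit. Unset Printing Implicit Defensive.

(* Binary expansion of m, least significant bit first, without leading zeros.
   bits 0 = [::] (the empty expansion). Fuel m suffices since m./2 < m. *)
Fixpoint bits_aux (fuel m : nat) : seq bool :=
  match fuel with
  | 0 => [::]
  | fuel'.+1 => if m == 0 then [::] else odd m :: bits_aux fuel' m./2
  end.
Definition bits (m : nat) : seq bool := bits_aux m m.

(* A036991: reading bits from LSB to MSB, every prefix has #1 >= #0. *)
Definition inD (m : nat) : bool :=
  all (fun k => count (fun b => ~~ b) (take k (bits m)) <= count id (take k (bits m)))
      (iota 0 (size (bits m)).+1).

Definition Mn (n : nat) : nat := 2 ^ n - 1.

Definition in_segment (n j t : nat) : bool :=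
  (Mn n.-1 + (j - 1) * 2 ^ (n - 3) < t) && (t <= Mn n.-1 + j * 2 ^ (n - 3)).
Example bits_6 : bits 6 = [:: false; true; true]. Proof. by []. Qed.
Example inD_test : [seq m <- iota 0 20 | inD m] = [:: 0; 1; 3; 5; 7; 11; 13; 15; 19]. Proof. by vm_compute. Qed.

(* Main.v *)
Require Import Defs.
From mathcomp Require Import all_boot.
From mathcomp Require Import zify.

Lemma leq_half m : m./2 <= m.
Proof. by rewrite leq_half_double -addnn; lia. Qed.

Lemma bits_auxE f f' m : m <= f -> m <= f' -> bits_aux f m = bits_aux f' m.
Proof.
elim: f f' m => [|f IH] [|f'] m /=; rewrite ?leqn0.
- by [].
- by move=> /eqP -> _.
- by move=> _ /eqP ->.
move=> h1 h2; case: eqP => // /eqP m0; congr (_ :: _); apply: IH.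
  by have := leq_half m; lia.
by have := leq_half m; lia.
Qed.

Lemma bitsE m : bits m = if m == 0 then [::] else odd m :: bits m./2.
Proof.
rewrite /bits; case: m => [|m] //=; congr (_ :: _).
by apply: bits_auxE => //; have := leq_half m.+1; lia.
Qed.

Definition ok (s : seq bool) := forall k, count (fun b => ~~ b) (take k s) <= count id (take k s).

Lemma inDP m : inD m <-> ok (bits m).
Proof.
rewrite /inD; split.
- move/allP=> H k; case: (leqP k (size (bits m))) => hk.
    by apply: H; rewrite mem_iota; lia.
  rewrite take_oversize; last by lia.
  by have := H (size (bits m)); rewrite mem_iota take_size; apply; lia.
- by move=> H; apply/allP => k _; apply: H.
Qed.

Lemma okA s : ok s -> ok (true :: false :: s).
Proof. move=> H [|[|k]] //=; have := H k; lia. Qed.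
Lemma okB s : ok s -> ok (true :: true :: s).
Proof. move=> H [|[|k]] //=; have := H k; lia. Qed.
Lemma okC s : ok (true :: s) -> ok (true :: true :: false :: s).
Proof. move=> H [|[|[|k]]] //=; have := H k.+1; simpl; lia. Qed.

Lemma bits2 m (b : bool) : 0 < m -> bits (m.*2 + b) = b :: bits m.
Proof.
move=> m0; rewrite bitsE; case: eqP => [|_]; first by rewrite -addnn; lia.
rewrite oddD odd_double /=; congr (_ :: _); first by case: b.
congr bits; case: b => /=; rewrite ?addn1 ?addn0 ?doubleK //.
by rewrite -[(m.*2.+1)./2]/(uphalf m.*2) uphalf_double.
Qed.


Theorem proposition12 (n j t : nat) :
  6 <= n -> ~~ odd n -> 1 <= j <= 4 -> inD t ->
  in_segment n j t ->
  [/\ inD (4 * t - 1), inD (4 * t + 1) & inD (4 * t + 3)] /\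
  [/\ in_segment (n + 2) j (4 * t - 1), in_segment (n + 2) j (4 * t + 1)
    & in_segment (n + 2) j (4 * t + 3)].
Proof.
move=> hn _ hj /inDP hD.
rewrite /in_segment /Mn => hs.
have e1 : (n + 2).-1 = (n - 3) + 4 by lia.
have e2 : n.-1 = (n - 3) + 2 by lia.
have e3 : n + 2 - 3 = (n - 3) + 2 by lia.
move: hs; rewrite e1 e2 e3 !expnD (_ : 2^2 = 4) // (_ : 2^4 = 16) //.
have hP : 8 <= 2 ^ (n - 3).
  by rewrite (_ : 8 = 2 ^ 3) // leq_exp2l //; lia.
move: hP; set P := 2 ^ (n - 3) => hP hs.
have t0 : 0 < t by case: j hj hs => [|[|[|[|[|j]]]]] //=; lia.
have todd : odd t.
  have := hD 1; rewrite bitsE; case: eqP => [e|_ /=]; first lia.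
  by case: (odd t) => //=; rewrite !take0.
have [u tu] : exists u, t = u.*2.+1.
  by exists t./2; rewrite -[t in LHS]odd_double_half todd.
have u0 : 0 < u by case: j hj hs => [|[|[|[|[|j]]]]] //=; lia.
have [Q PQ] : exists Q, P = Q.*2.
  by exists (2 ^ (n - 4)); rewrite /P -mul2n -expnS; congr (2 ^ _); lia.
split.
- split; apply/inDP.
  + have -> : 4 * t - 1 = ((u.*2 + false).*2 + true).*2 + true by rewrite /=; lia.
    rewrite !bits2; try (rewrite /=; lia).
    by apply: okC; move: hD; rewrite tu (_ : u.*2.+1 = u.*2 + true) ?bits2 //; rewrite /=; lia.
  + have -> : 4 * t + 1 = (t.*2 + false).*2 + true by rewrite /=; lia.
    rewrite !bits2; try (rewrite /=; lia). exact: okA.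
  + have -> : 4 * t + 3 = (t.*2 + true).*2 + true by rewrite /=; lia.
    rewrite !bits2; try (rewrite /=; lia). exact: okB.
- case: j hj hs => [|[|[|[|[|j]]]]] //= hs; split; lia.
Qed.
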